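(* Let $\Sigma$ be an infinite alphabet and let $\mathcal{F}$ be a finite automaton over $\Sigma$ (finitely many states and finitely many transitions, each labelled by a letter of $\Sigma$). Then there exists a GVA $\mathcal{A}$ over $\Sigma$ such that $L(\mathcal{A})=\Sigma^{\star}\setminus L(\mathcal{F})$. That is, the complement of a regular language over $\Sigma$ is GVA-recognizable.
   Context: Fix an infinite alphabet $\Sigma$. A guard over a set of variables $\mathcal{X}$ (disjoint from $\Sigma$) is built by the grammar $g ::= \mathit{true} \mid \alpha=\beta \mid \alpha\neq\beta \mid g\wedge g$ with $\alpha,\beta\in\Sigma\cup\mathcal{X}$. A GVA is a tuple $\mathcal{A}=\langle\Sigma,\mathcal{X},Q,Q_0,\delta,F,\kappa\rangle$ where $\mathcal{X}$ is a finite set of variables, $Q$ a finite set of states, $Q_0\subseteq Q$ the initial states, $F\subseteq Q$ the accepting states, $\delta$ a finite set of transitions $q\xrightarrow{\alpha,g}q'$ with $q,q'\in Q$, $\alpha\in\Sigma\cup\mathcal{X}\cup\{\varepsilon\}$ and $g$ a guard, and $\kappa:\mathcal{X}\to 2^{Q}$ the refreshing function ($\kappa(x)$ is the set of states in which $x$ is freed). A configuration is a pair $(\sigma,q)$ with $q\in Q$ and $\sigma$ a partial map $\mathcal{X}\to\Sigma$. There is a step $(\sigma,q)\xrightarrow{a}(\sigma',q')$, $a\in\Sigma\cup\{\varepsilon\}$, if there is a transition $q\xrightarrow{\alpha,g}q'$ and a map $\gamma$ from the variables occurring in $\alpha$ or $g$ that are not in $\mathrm{dom}(\sigma)$ to $\Sigma$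 such that, with $\rho=\sigma\uplus\gamma$ (extended to be the identity on letters), $\rho$ satisfies $g$, $a=\rho(\alpha)$ if $\alpha\neq\varepsilon$ and $a=\varepsilon$ if $\alpha=\varepsilon$, and $\sigma'$ is the restriction of $\rho$ to $\{x\in\mathrm{dom}(\rho) : q'\notin\kappa(x)\}$. A word $w\in\Sigma^{\star}$ is accepted if there is a sequence of steps from $(\emptyset,q_0)$ with $q_0\in Q_0$ to some $(\sigma,q_f)$ with $q_f\in F$ whose labels concatenate to $w$; $L(\mathcal{A})$ is the set of accepted words. *)

(* Defs.v *)
From mathcomp Require Import all_boot.
From Stdlib Require Import List.
Set Implicit Arguments. Unset Strict Implicit. Unset Printing Implicit Defensive.

Definition infinite_alphabet (Sigma : Type) : Prop :=
  forall l : list Sigma, exists a : Sigma, ~ List.In a l.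

Record NFA (Sigma : Type) (n : nat) := {
  nfa_init  : pred 'I_n;
  nfa_final : pred 'I_n;
  nfa_trans : list ('I_n * Sigma * 'I_n) }.

Inductive nfa_run (Sigma : Type) (n : nat) (F : NFA Sigma n) :
    'I_n -> list Sigma -> 'I_n -> Prop :=
| nfa_run_nil q : nfa_run F q nil q
| nfa_run_cons q a q1 w q2 :
    List.In (q, a, q1) (nfa_trans F) -> nfa_run F q1 w q2 -> nfa_run F q (a :: w) q2.

Definition nfa_lang (Sigma : Type) (n : nat) (F : NFA Sigma n) (w : list Sigma) : Prop :=
  exists q0 qf, nfa_init F q0 /\ nfa_run F q0 w qf /\ nfa_final F qf.

Inductive sym (Sigma X : Type) := SLet (a : Sigma) | SVar (x : X).

Inductive guard (Sigma X : Type) :=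
| GTrue
| GEq  (s t : sym Sigma X)
| GNeq (s t : sym Sigma X)
| GAnd (g1 g2 : guard Sigma X).

Definition sym_vars (Sigma X : Type) (s : sym Sigma X) : list X :=
  match s with SLet _ => nil | SVar x => x :: nil end.

Fixpoint guard_vars (Sigma X : Type) (g : guard Sigma X) : list X :=
  match g with
  | GTrue => nil
  | GEq s t => sym_vars s ++ sym_vars t
  | GNeq s t => sym_vars s ++ sym_vars t
  | GAnd g1 g2 => guard_vars g1 ++ guard_vars g2
  end.

Definition valuation (Sigma X : Type) := X -> option Sigma.

Definition sym_eval (Sigma X : Type) (rho : valuation Sigma X) (s : sym Sigma X)
  : option Sigma :=
  match s with SLet a => Some a | SVar x => rho x end.

Fixpoint sat (Sigma X : Type) (rho : valuation Sigma X) (g : guard Sigma X) : Prop :=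
  match g with
  | GTrue => True
  | GEq s t => exists v w, sym_eval rho s = Some v /\ sym_eval rho t = Some w /\ v = w
  | GNeq s t => exists v w, sym_eval rho s = Some v /\ sym_eval rho t = Some w /\ v <> w
  | GAnd g1 g2 => sat rho g1 /\ sat rho g2
  end.

(* A GVA with states Q = 'I_nQ and variables X = 'I_nX.
   Transitions q --(alpha,g)--> q' with alpha = None standing for epsilon.
   gva_kappa x q  means q \in kappa(x) (x is freed in q). *)
Record GVA (Sigma : Type) (nQ nX : nat) := {
  gva_init  : pred 'I_nQ;
  gva_final : pred 'I_nQ;
  gva_trans : list ('I_nQ * option (sym Sigma 'I_nX) * guard Sigma 'I_nX * 'I_nQ);
  gva_kappa : 'I_nX -> pred 'I_nQ }.

Definition alpha_vars (Sigma X : Type) (al : option (sym Sigma X)) : list X :=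
  match al with None => nil | Some s => sym_vars s end.

Definition gva_step (Sigma : Type) (nQ nX : nat) (A : GVA Sigma nQ nX)
  (sigma : valuation Sigma 'I_nX) (q : 'I_nQ) (a : option Sigma)
  (sigma' : valuation Sigma 'I_nX) (q' : 'I_nQ) : Prop :=
  exists (al : option (sym Sigma 'I_nX)) (g : guard Sigma 'I_nX)
         (rho : valuation Sigma 'I_nX),
    List.In (q, al, g, q') (gva_trans A) /\
    (* rho = sigma (+) gamma, gamma defined exactly on the variables of al, g
       that are outside dom(sigma) *)
    (forall x v, sigma x = Some v -> rho x = Some v) /\
    (forall x, rho x <> None <->
       (sigma x <> None \/ List.In x (alpha_vars al ++ guard_vars g))) /\
    sat rho g /\
    (match al with
     | None => a = None
     | Some s => a <> None /\ a = sym_eval rho s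
     end) /\
    (forall x, sigma' x = if gva_kappa A x q' then None else rho x).

Definition opt_word (Sigma : Type) (a : option Sigma) : list Sigma :=
  match a with None => nil | Some b => b :: nil end.

Inductive gva_run (Sigma : Type) (nQ nX : nat) (A : GVA Sigma nQ nX) :
  valuation Sigma 'I_nX -> 'I_nQ -> list Sigma -> valuation Sigma 'I_nX -> 'I_nQ -> Prop :=
| gva_run_nil sigma q : gva_run A sigma q nil sigma q
| gva_run_step sigma q a sigma1 q1 w sigma2 q2 :
    gva_step A sigma q a sigma1 q1 -> gva_run A sigma1 q1 w sigma2 q2 ->
    gva_run A sigma q (opt_word a ++ w) sigma2 q2.

Definition gva_lang (Sigma : Type) (nQ nX : nat) (A : GVA Sigma nQ nX)
  (w : list Sigma) : Prop :=
  exists q0 sigma qf, gva_init A q0 /\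
    gva_run A (fun _ => None) q0 w sigma qf /\ gva_final A qf.

(* Main.v *)
Require Import Defs.
From mathcomp Require Import all_boot.
From Stdlib Require Import List ClassicalEpsilon.

Lemma in_In (T : eqType) (x : T) (s : list T) : x \in s -> List.In x s.
Proof.
elim: s => [|y s IH] //=; rewrite seq.in_cons => /orP [/eqP ->|H]; [left|right; apply IH]; done.
Qed.

Definition pb (P : Prop) : bool :=
  if excluded_middle_informative P then true else false.

Lemma pbP (P : Prop) : pb P = true <-> P.
Proof. rewrite /pb; case: excluded_middle_informative => //; split => //. Qed.

Section Cons.
Variables (Sigma : Type) (n : nat) (F : NFA Sigma n).

Definition post (S : {set 'I_n}) (a : Sigma) : {set 'I_n} :=
  [set q' | pb (exists q, q \in S /\ List.In (q, a, q') (nfa_trans F))].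

Definition dstar (S : {set 'I_n}) (w : list Sigma) := foldl post S w.

Definition LL : list Sigma := List.map (fun t => t.1.2) (nfa_trans F).

Definition x0 : 'I_1 := ord0.

Fixpoint gneq_all (l : list Sigma) : guard Sigma 'I_1 :=
  match l with
  | nil => GTrue Sigma 'I_1
  | a :: l => GAnd (GNeq (SVar _ x0) (SLet _ a)) (gneq_all l)
  end.

Definition trans_of (S : {set 'I_n}) :=
  (enum_rank S, Some (SVar Sigma x0), gneq_all LL, enum_rank (set0 : {set 'I_n}))
  :: List.map (fun a => (enum_rank S, Some (SLet 'I_1 a), GTrue Sigma 'I_1, enum_rank (post S a))) LL.

Definition S0 : {set 'I_n} := [set q | nfa_init F q].

Definition Aut : GVA Sigma #|{: {set 'I_n}}| 1 := {|
  gva_init := fun i => i == enum_rank S0;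
  gva_final := fun i => [forall q, (q \in enum_val i) ==> ~~ nfa_final F q];
  gva_trans := List.flat_map trans_of (enum {set 'I_n});
  gva_kappa := fun _ _ => true |}.

Lemma post_notin S b : ~ List.In b LL -> post S b = set0.
Proof.
move=> Hb; apply/setP => q; rewrite inE in_set0.
case E: pb => //; move/pbP: E => [p [_ H]]; exfalso; apply Hb.
by apply (in_map (fun t => t.1.2) _ _ H).
Qed.

Lemma sat_gneq (rho : valuation Sigma 'I_1) b l :
  rho x0 = Some b -> sat rho (gneq_all l) <-> (forall a, List.In a l -> b <> a).
Proof.
move=> Hr; elim: l => [|a l IH] /=; first by split.
rewrite IH; split.
- move=> [[v [w [H1 [H2 H3]]]] H] a' [<-|Ha]; last by apply H.
  rewrite /= Hr in H1 H2; case: H1 => Hv; case: H2 => Hw; subst; done.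
- move=> H; split; last by move=> a' Ha; apply H; right.
  exists b, a; split => //; split => //; apply H; left; done.
Qed.

Lemma step_fwd sigma q a sigma' q' :
  gva_step Aut sigma q a sigma' q' ->
  exists b S, a = Some b /\ q = enum_rank S /\ q' = enum_rank (post S b).
Proof.
move=> [al [g [rho [Hin [_ [_ [Hsat [Ha _]]]]]]]].
move: Hin => /= /in_flat_map [S [_ [E|/in_map_iff [b [E _]]]]].
- case: E => ? ? ? ?; subst; move: Ha => [Ha Ha']; simpl in Ha'.
  case E: (rho x0) Ha' Ha => [b|] -> // _.
  exists b, S; split => //; split => //; congr enum_rank.
  symmetry; apply post_notin => Hb.
  by move: (proj1 (sat_gneq _ _ LL E) Hsat b Hb).
- case: E => ? ? ? ?; subst; move: Ha => [_ ->] /=.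
  by exists b, S.
Qed.

Lemma step_bwd S b :
  gva_step Aut (fun _ => None) (enum_rank S) (Some b) (fun _ => None)
    (enum_rank (post S b)).
Proof.
case: (classic (List.In b LL)) => Hb.
- exists (Some (SLet _ b)), (GTrue _ _), (fun _ => None); split.
  + apply/in_flat_map; exists S; split; first by apply in_In; rewrite mem_enum.
    right; apply/in_map_iff; exists b; split => //.
  + split => //; split; first by move=> x /=; split => [H|[H|H]] //.
    split => //; split => //.
- exists (Some (SVar _ x0)), (gneq_all LL), (fun _ => Some b); split.
  + apply/in_flat_map; exists S; split; first by apply in_In; rewrite mem_enum.
    left; rewrite post_notin //.
  + split => //; split.
    * move=> x; split => // _; right; left; apply/ord_inj; case: x => [[|m] Hm] //.
    * split; last by split.
      apply (proj2 (sat_gneq (fun _ => Some b) b LL (erefl (Some b)))).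
      by move=> a Ha E; apply Hb; rewrite E.
Qed.

Lemma run_fwd sigma q w sigma' q' :
  gva_run Aut sigma q w sigma' q' ->
  forall S, q = enum_rank S -> q' = enum_rank (dstar S w).
Proof.
elim => [//|sg p a sg1 p1 w' sg2 p2 Hs _ IH] S E.
case: (step_fwd _ _ _ _ _ Hs) => [b [S' [-> [E' E'']]]].
rewrite E in E'; have ES : S = S'.
  by rewrite -(enum_rankK S) E' enum_rankK.
subst S'; simpl; by apply IH.
Qed.

Lemma run_bwd w S :
  gva_run Aut (fun _ => None) (enum_rank S) w (fun _ => None) (enum_rank (dstar S w)).
Proof.
elim: w S => [|b w IH] S; first by apply gva_run_nil.
have := gva_run_step (step_bwd S b) (IH (post S b)); done.
Qed.

Lemma dstarP w : forall S q', q' \in dstar S w <-> exists q, q \in S /\ nfa_run F q w q'.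
Proof.
elim: w => [|b w IH] S q' /=.
- split; first by move=> H; exists q'; split => //; constructor.
  by move=> [q [H Hr]]; inversion Hr; subst.
- rewrite IH; split.
  + move=> [p [Hp Hr]]; move: Hp; rewrite inE => /pbP [q [Hq Ht]].
    exists q; split => //; econstructor; eauto.
  + move=> [q [Hq Hr]]; inversion Hr; subst.
    exists q1; split => //; rewrite inE; apply/pbP; exists q; split => //.
Qed.

End Cons.

Theorem mainTheorem2 (Sigma : Type) (Hinf : infinite_alphabet Sigma)
  (n : nat) (F : NFA Sigma n) :
  exists (nQ nX : nat) (A : GVA Sigma nQ nX),
    forall w : list Sigma, gva_lang A w <-> ~ nfa_lang F w.
Proof.
exists #|{: {set 'I_n}}|, 1, (@Aut Sigma n F) => w; split.
- move=> [q0 [sigma [qf [/eqP Hi [Hr Hf]]]]] [p0 [pf [Hp0 [Hpr Hpf]]]].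
  have E := run_fwd _ _ _ _ _ _ _ _ Hr _ Hi; rewrite E /= enum_rankK in Hf.
  move/forallP: Hf => /(_ pf) /implyP H.
  have : pf \in @dstar Sigma n F (@S0 Sigma n F) w by apply/(@dstarP _ _ F); exists p0; split => //; rewrite inE.
  by move/H; rewrite Hpf.
- move=> Hn; exists (enum_rank (@S0 Sigma n F)), (fun _ => None), (enum_rank (@dstar Sigma n F (@S0 Sigma n F) w)).
  split; first by rewrite /= eqxx.
  split; first by apply run_bwd.
  rewrite /= enum_rankK; apply/forallP => q; apply/implyP => Hq.
  apply/negP => Hf; apply Hn; move/(@dstarP _ _ F): Hq => [p [Hp Hr]].
  exists p, q; split; first by move: Hp; rewrite inE.
  by split.
Qed.
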